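(* Let $X$ be a real Banach space, $f:X\to\mathbb{R}\cup\{+\infty\}$ proper, convex and lsc, and assume $F_{\partial f}(x,x^* ) = f(x)+f^*(x^* )$ for some $(x,x^* )\in\mathrm{dom}\, f\times\mathrm{dom}\, f^*$. Then for every $(a,a^* )\in\mathcal{M}_{\partial f}(x,x^* )$, \[ a^*\in\partial f(x)\cap\partial f(a) \quad\text{and}\quad a\in\partial f^*(x^* )\cap\partial f^*(a^* ). \]
   Context: $f^*$ is the Fenchel conjugate. For a monotone $A:X\rightrightarrows X^*$, $F_A(x,x^* ) = \sup_{(y,y^* )\in\mathrm{Gr}(A)}\{\langle y,x^*\rangle+\langle x,y^*\rangle-\langle y,y^*\rangle\}$ is the Fitzpatrick function and $\mathcal{M}_A(x,x^* ) = \{(a,a^* )\in\mathrm{Gr}(A): F_A(x,x^* ) = \langle x,a^*\rangle + \langle a,x^*\rangle - \langle a,a^*\rangle\}$ is the set of points of the graph attaining this supremum. $\partial f^*(x^* )$ denotes $\{y\in X: f^*(z^* )\ge f^*(x^* )+\langle y, z^*-x^*\rangle\ \forall z^*\}$. *)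

(* Defs.v *)
From HB Require Import structures.
From mathcomp Require Import all_boot all_order all_algebra.
From mathcomp Require Import all_classical all_reals all_analysis.
Set Implicit Arguments. Unset Strict Implicit. Unset Printing Implicit Defensive.
Import Order.TTheory GRing.Theory Num.Theory.
Import numFieldNormedType.Exports.
Local Open Scope classical_set_scope.
Local Open Scope ring_scope.

(* Elements of the topological dual X^* of a real normed space X are
   represented as functions X -> R that are linear and continuous;
   the duality pairing <x, x^*> is the application x^* x. *)
Definition is_dual (R : realType) (X : normedModType R) (xs : X -> R) : Prop :=
  (forall (a : R) (u v : X), xs (a *: u + v) = a * xs u + xs v) /\ continuous xs.

Definition dualset (R : realType) (X : normedModType R) : set (X -> R) :=
  [set xs | is_dual xs].

Definition proper_fun (R : realType) (X : normedModType R) (f : X -> \bar R) : Prop :=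
  (forall x, f x != -oo%E) /\ exists x, f x != +oo%E.

Definition convex_fun (R : realType) (X : normedModType R) (f : X -> \bar R) : Prop :=
  forall (x y : X) (t : R), 0 < t < 1 ->
    (f (t *: x + (1 - t) *: y)%R <= t%:E * f x + (1 - t)%:E * f y)%E.

Definition dom (R : realType) (X : normedModType R) (f : X -> \bar R) : set X :=
  [set x | f x < +oo]%E.

Definition conj (R : realType) (X : normedModType R) (f : X -> \bar R)
  (xs : X -> R) : \bar R :=
  ereal_sup [set ((xs y)%:E - f y)%E | y in [set: X]].

Definition dom_conj (R : realType) (X : normedModType R) (f : X -> \bar R)
  : set (X -> R) := [set xs | is_dual xs /\ (conj f xs < +oo)%E].

Definition subdiff (R : realType) (X : normedModType R) (f : X -> \bar R) (x : X)
  : set (X -> R) :=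
  [set xs | is_dual xs /\ forall y : X, (f y >= f x + (xs (y - x)%R)%:E)%E].

(* subdifferential of f^* at x^* : a subset of X (as in the paper) *)
Definition subdiff_conj (R : realType) (X : normedModType R) (f : X -> \bar R)
  (xs : X -> R) : set X :=
  [set y | forall zs : X -> R, is_dual zs ->
     (conj f zs >= conj f xs + ((zs y - xs y)%R)%:E)%E].

Definition graph (R : realType) (X : normedModType R) (A : X -> set (X -> R))
  : set (X * (X -> R)) := [set p | A p.1 p.2].

Definition fitzpatrick (R : realType) (X : normedModType R) (A : X -> set (X -> R))
  (x : X) (xs : X -> R) : \bar R :=
  ereal_sup [set ((p.2 x + xs p.1 - p.2 p.1)%R)%:E | p in graph A].

Definition Mset (R : realType) (X : normedModType R) (A : X -> set (X -> R))
  (x : X) (xs : X -> R) : set (X * (X -> R)) :=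
  [set p | graph A p /\
     fitzpatrick A x xs = ((p.2 x + xs p.1 - p.2 p.1)%R)%:E].

(* Main.v *)
Require Import Defs.
From HB Require Import structures.
From mathcomp Require Import all_boot all_order all_algebra.
From mathcomp Require Import all_classical all_reals all_analysis.
From mathcomp Require Import lra.
Import Order.TTheory GRing.Theory Num.Theory.
Import numFieldNormedType.Exports.
Local Open Scope classical_set_scope.
Local Open Scope ring_scope.

Lemma dual_sub (R : realType) (X : normedModType R) (zs : X -> R) (u v : X) :
  is_dual zs -> zs (u - v) = zs u - zs v.
Proof.
move=> [lin _]; have := lin (-1) v u.
rewrite scaleN1r addrC => ->; lra.
Qed.

Lemma conj_ge (R : realType) (X : normedModType R) (f : X -> \bar R) zs y r :
  f y = r%:E -> ((zs y - r)%:E <= conj f zs)%E.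
Proof.
move=> fy; apply: ereal_sup_ubound; exists y => //; by rewrite fy.
Qed.

Arguments conj_ge {R X f} zs {y r}.

Theorem proposition4p1 (R : realType) (X : completeNormedModType R)
  (f : X -> \bar R) (x : X) (xs : X -> R) :
  proper_fun f -> convex_fun f -> lower_semicontinuous f ->
  x \in dom f -> xs \in dom_conj f ->
  fitzpatrick (subdiff f) x xs = (f x + conj f xs)%E ->
  forall (a : X) (as_ : X -> R), Mset (subdiff f) x xs (a, as_) ->
    (as_ \in subdiff f x `&` subdiff f a) /\
    (a \in subdiff_conj f xs `&` subdiff_conj f as_).
Proof.
move=> [fnoo [y0 fy0]] _ _; rewrite !inE /dom /dom_conj /= => fxlt [dxs clt] Fit a as_.
move=> [[dual_as sub_a] /= Fe]; rewrite /= in dual_as sub_a.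
have [fa Hfa] : exists fa, f a = fa%:E.
  move: (fnoo a) (sub_a y0) fy0; case: (f a) => [r _ _ _| _ | //]; first by exists r.
  by case: (f y0).
have [fx Hfx] : exists fx, f x = fx%:E.
  by move: (fnoo x) fxlt; case: (f x) => [r _ _| //| //]; exists r.
have ca : conj f as_ = (as_ a - fa)%:E.
  apply/eqP; rewrite eq_le conj_ge // andbT.
  apply: ge_ereal_sup => _ [y _ <-].
  have := sub_a y; rewrite Hfa (@dual_sub _ _ _ _ _ dual_as).
  case: (f y) => [r| |] //=; last by rewrite addeNy leNye.
  by rewrite -!EFinD !lee_fin => h; lra.
have [cx Hcx] : exists cx, conj f xs = cx%:E.
  have := conj_ge xs Hfx; move: clt; case: (conj f xs) => [r _ _| //| //].
  by exists r.
move: Fe; rewrite Fit Hfx Hcx -EFinD => -[Fe].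
have h1 := conj_ge xs Hfa; rewrite Hcx lee_fin in h1.
have h2 := conj_ge as_ Hfx; rewrite ca lee_fin in h2.
have e1 : cx = xs a - fa by lra.
have e2 : as_ a - fa = as_ x - fx by lra.
split; rewrite !inE; split.
- split => // y; have := sub_a y; rewrite Hfx Hfa !(@dual_sub _ _ _ _ _ dual_as).
  by rewrite -!EFinD => h; apply: le_trans h; rewrite lee_fin; lra.
- by split.
- move=> zs dzs; rewrite Hcx -EFinD.
  apply: le_trans (conj_ge zs Hfa); rewrite lee_fin; lra.
- move=> zs dzs; rewrite ca -EFinD.
  apply: le_trans (conj_ge zs Hfa); rewrite lee_fin; lra.
Qed.
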